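(* Let $\mathcal{J}$ be a Jordan algebra of finite dimension $n$ over a field $\mathcal{F}$ of characteristic different from $2$, let $\Lambda=(\lambda_{i,j})_{i,j=1,\dots,n}$ be an $n\times n$ matrix all of whose entries are non-zero elements of $\mathcal{F}$, and let $\mathcal{V}$ be a basis of $\mathcal{J}$. Let $\Delta:\mathcal{J}\to\mathcal{J}$ be a map such that for every $x,y\in\mathcal{J}$ there is a derivation $D_{x,y}$ of $\mathcal{J}$ which is $\Lambda$-symmetric with respect to $\mathcal{V}$ and satisfies $\Delta(x)=D_{x,y}(x)$ and $\Delta(y)=D_{x,y}(y)$. Then $\Delta$ is a derivation.
   Context: A derivation of $\mathcal{J}$ is a linear map $D$ with $D(xy)=D(x)y+xD(y)$ for all $x,y$. For a linear map $\psi$ on $\mathcal{J}$ and the ordered basis $\mathcal{V}=(v_1,\dots,v_n)$, the matrix of $\psi$ is $(x_{i,j})$ with $\psi(v_j)=\sum_i x_{i,j}v_i$; $\psi$ is $\Lambda$-symmetric with respect to $\mathcal{V}$ if this matrix equals $(\lambda_{i,j}a_{i,j})_{i,j}$ for some symmetric matrix $(a_{i,j})$. *)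

(* Defs.v *)
From mathcomp Require Import all_boot all_algebra.
Set Implicit Arguments. Unset Strict Implicit. Unset Printing Implicit Defensive.
Import GRing.Theory.
Local Open Scope ring_scope.

Definition bilinear_mul (F : fieldType) (J : vectType F) (mul : J -> J -> J) :=
  (forall x, linear (mul x)) /\ (forall y, linear (mul^~ y)).

Definition is_jordan_algebra (F : fieldType) (J : vectType F) (mul : J -> J -> J) :=
  [/\ bilinear_mul mul,
      (forall x y, mul x y = mul y x) &
      (forall x y, mul (mul x y) (mul x x) = mul x (mul y (mul x x)))].

Definition is_derivation (F : fieldType) (J : vectType F) (mul : J -> J -> J)
    (D : J -> J) :=
  linear D /\ forall x y, D (mul x y) = mul (D x) y + mul x (D y).

Definition mx_of_map (F : fieldType) (J : vectType F) (n : nat)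
    (V : n.-tuple J) (psi : J -> J) : 'M[F]_n :=
  \matrix_(i < n, j < n) coord V i (psi (tnth V j)).

Definition Lambda_symmetric (F : fieldType) (J : vectType F) (n : nat)
    (Lam : 'M[F]_n) (V : n.-tuple J) (psi : J -> J) :=
  exists A : 'M[F]_n, A^T = A /\
    mx_of_map V psi = \matrix_(i < n, j < n) (Lam i j * A i j).

(* Main.v *)
Require Import Defs.
From mathcomp Require Import all_boot all_algebra.
From mathcomp Require Import ring.
Local Open Scope ring_scope.
Import GRing.Theory.

Lemma lin_add (F : fieldType) (U W : lmodType F) (f : U -> W) :
  linear f -> forall u v, f (u + v) = f u + f v.
Proof. by move=> hf u v; rewrite -[u in LHS]scale1r hf scale1r. Qed.
Arguments lin_add {F U W f}.

Lemma lin_0 (F : fieldType) (U W : lmodType F) (f : U -> W) :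
  linear f -> f 0 = 0.
Proof.
move=> hf; have := lin_add hf 0 0; rewrite addr0.
by move/(congr1 (fun t => t - f 0)); rewrite subrr addrK => <-.
Qed.
Arguments lin_0 {F U W f}.

Lemma lin_sum (F : fieldType) (U W : lmodType F) (f : U -> W) (I : finType)
  (a : I -> F) (v : I -> U) :
  linear f -> f (\sum_i a i *: v i) = \sum_i a i *: f (v i).
Proof.
move=> hf; elim/big_rec2: _ => [|i y1 y2 _ <-]; first exact: lin_0.
by rewrite hf.
Qed.

Lemma aux (Z : zmodType) (p q r s a : Z) :
  p *+ 2 + a + (a + q *+ 2) = (p + r + (s + q)) *+ 2 -> a *+ 2 = (s + r) *+ 2.
Proof.
rewrite [p *+ 2 + a]addrC [LHS]addrACA -mulr2n [LHS]addrC.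
rewrite !mulrnDl [s *+ 2 + q *+ 2]addrC [RHS]addrACA => /addrI ->.
by rewrite addrC.
Qed.

Theorem theorem3p1 (F : fieldType) (J : vectType F) (mul : J -> J -> J)
    (n : nat) (Lam : 'M[F]_n) (V : n.-tuple J) (Delta : J -> J) :
  (2%N) \notin [pchar F] ->
  is_jordan_algebra mul ->
  \dim (fullv : {vspace J}) = n ->
  basis_of fullv V ->
  (forall i j, Lam i j != 0) ->
  (forall x y : J, exists D : J -> J,
      [/\ is_derivation mul D, Lambda_symmetric Lam V D,
          Delta x = D x & Delta y = D y]) ->
  is_derivation mul Delta.
Proof.
move=> h2 [[hm1 hm2] hcomm _] _ hB hL hloc.
have key : forall x, Delta x = \sum_(i < n) (\sum_(j < n) coord V j x *
    (Lam i j / Lam j i * coord V j (Delta (tnth V i)))) *: tnth V i.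
  move=> x; rewrite {1}(coord_basis hB (memvf (Delta x))).
  apply: eq_bigr => i _; rewrite (tnth_nth 0); congr (_ *: _).
  have [D [[hDl _] [A [hA hM]] e1 e2]] := hloc x (tnth V i).
  rewrite e1 {1}(coord_basis hB (memvf x)) lin_sum // linear_sum.
  apply: eq_bigr => j _; rewrite linearZ /=; congr (_ * _).
  rewrite -?(tnth_nth 0) e2.
  have M1 := congr1 (fun M : 'M[F]_n => M i j) hM; have M2 := congr1 (fun M : 'M[F]_n => M j i) hM.
  have A1 := congr1 (fun M : 'M[F]_n => M i j) hA.
  rewrite /= /mx_of_map !mxE in M1 M2 A1.
  by rewrite M1 M2 A1 mulrA divfK.
have hlin : linear Delta.
  move=> a x y; rewrite !key scaler_sumr -big_split; apply: eq_bigr => i _.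
  rewrite /= scalerA -scalerDl; congr (_ *: _).
  rewrite mulr_sumr -big_split; apply: eq_bigr => j _.
  rewrite linearP /=; ring.
split=> // x y.
have n2 : (2%:R : F) != 0.
  by apply: contra h2 => h; rewrite inE /= h.
have addD := lin_add hlin.
have addL z u v : mul z (u + v) = mul z u + mul z v by apply: lin_add.
have addR z u v : mul (u + v) z = mul u z + mul v z.
  exact: (lin_add (hm2 z)).
have sq z : Delta (mul z z) = mul z (Delta z) *+ 2.
  have [D [[_ hD] _ e1 e2]] := hloc z (mul z z).
  by rewrite e2 hD -e1 hcomm mulr2n.
have H := sq (x + y).
rewrite !addR !addL !addD !sq ?addR ?addL (hcomm y x) in H.
move/aux: H => H.
rewrite (hcomm (Delta x) y).
apply: (can_inj (scalerK n2)); rewrite !scaler_nat.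
by rewrite H mulrnDl addrC.
Qed.
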